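(* Let $(D_d)_{d\in\mathbb{N}}$ satisfy Property (P), let $(L_d)$ be positive numbers with $\lim_{d\to\infty}L_d\sqrt d=0$, and let $C_d^0(L)=\{f\colon D_d\to\mathbb{R}\mid \|f\|_\infty\le1,\ \operatorname{Lip}(f)\le L_d\}$. Then for every $\varepsilon\in(0,1)$ there is $d(\varepsilon)$ such that $n(\varepsilon,C_d^0(L))=1$ for all $d\ge d(\varepsilon)$.
   Context: Property (P): $(D_d)$ is a sequence of open sets $D_d\subset\mathbb R^d$ with $\lambda_d(D_d)=1$ for which there exist $x_d^*\in D_d$ and $R<\infty$ with $\lim_{d\to\infty}\lambda_d(\{x\in D_d\mid\|x-x_d^*\|_2\ge R\sqrt d\})=0$. $\operatorname{Lip}(f)=\sup_{x\ne y}|f(x)-f(y)|/\|x-y\|_2$. Information complexity $n(\varepsilon,F_d)$: the minimal number $n\ge0$ of function values such that some algorithm $A_{n,d}(f)=\phi_{n,d}(f(x_1),\dots,f(x_n))$ (points $x_j\in D_d$ possibly adaptive, $\phi_{n,d}$ arbitrary; constants if $n=0$) satisfies $\sup_{f\in F_d}|\int_{D_d}f(x)\,dx-A_{n,d}(f)|\le\varepsilon$. *)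

(* Defs.v *)
From HB Require Import structures.
From mathcomp Require Import all_boot all_order all_algebra.
From mathcomp Require Import all_classical all_reals all_analysis.
Set Implicit Arguments.
Unset Strict Implicit.
Unset Printing Implicit Defensive.
Import Order.TTheory GRing.Theory Num.Theory.
Import numFieldNormedType.Exports.
Local Open Scope classical_set_scope.
Local Open Scope ring_scope.

(* R^d is represented by d.-tuple R, which MathComp-Analysis equips with the
   product (Borel) sigma-algebra generated by the coordinate projections. *)

Section Defs.
Variable R : realType.

Definition dist2 (d : nat) (x y : d.-tuple R) : R :=
  Num.sqrt (\sum_(i < d) (tnth x i - tnth y i) ^+ 2).

Definition open_Rd (d : nat) (D : set (d.-tuple R)) : Prop :=
  forall x, D x -> exists2 r : R, 0 < r & forall y, dist2 y x < r -> D y.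

(* lam is Lebesgue measure on R^d: it is a measure on the Borel sets of R^d
   giving every half-open box its volume (this determines it uniquely). *)
Definition is_lebesgue_measure (d : nat)
    (lam : {measure set (d.-tuple R) -> \bar R}) : Prop :=
  forall a b : d.-tuple R, (forall i, tnth a i <= tnth b i) ->
    lam [set x | forall i, tnth a i <= tnth x i < tnth b i]
      = (\prod_(i < d) (tnth b i - tnth a i))%:E.

Definition propertyP (lam : forall d : nat, {measure set (d.-tuple R) -> \bar R})
    (D : forall d : nat, set (d.-tuple R)) : Prop :=
  (forall d, open_Rd (D d)) /\
  (forall d, lam d (D d) = 1%E) /\
  exists (xs : forall d : nat, d.-tuple R) (R0 : R),
    (forall d, D d (xs d)) /\
    (fun d : nat => lam d [set x | D d x /\ R0 * Num.sqrt d%:R <= dist2 x (xs d)])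
      @ \oo --> 0%E.

(* The class C_d^0(L) = {f : D -> R | ||f||_oo <= 1, Lip(f) <= L}; functions on
   D are represented by functions on R^d whose values outside D are irrelevant. *)
Definition lip_class (d : nat) (D : set (d.-tuple R)) (L : R)
    : set (d.-tuple R -> R) :=
  [set f | (forall x, D x -> `|f x| <= 1) /\
           (forall x y, D x -> D y -> `|f x - f y| <= L * dist2 x y)].

(* A (possibly adaptive) deterministic algorithm using n function values:
   the k-th node is alg_pt k ys, where ys are the previously observed values,
   and the output is alg_phi applied to the n observed values. *)
Record algorithm (X : Type) := Algorithm {
  alg_pt : nat -> seq R -> X ;
  alg_phi : seq R -> R }.

Fixpoint alg_values (X : Type) (A : algorithm X) (f : X -> R) (k : nat) : seq R :=
  match k with
  | 0 => [::]
  | k.+1 => let ys := alg_values A f k in rcons ys (f (alg_pt A k ys))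
  end.

Definition alg_output (X : Type) (A : algorithm X) (n : nat) (f : X -> R) : R :=
  alg_phi A (alg_values A f n).

Definition nodes_in (X : Type) (A : algorithm X) (n : nat) (D : set X) : Prop :=
  forall k ys, (k < n)%N -> D (alg_pt A k ys).

Definition eps_achievable (d : nat) (lam : {measure set (d.-tuple R) -> \bar R})
    (D : set (d.-tuple R)) (F : set (d.-tuple R -> R)) (eps : R) (n : nat) : Prop :=
  exists A : algorithm (d.-tuple R), nodes_in A n D /\
    forall f, F f ->
      (`| (\int[lam]_(x in D) (f x)%:E) - (alg_output A n f)%:E | <= eps%:E)%E.

Definition info_complexity_eq (d : nat) (lam : {measure set (d.-tuple R) -> \bar R})
    (D : set (d.-tuple R)) (F : set (d.-tuple R -> R)) (eps : R) (n : nat) : Prop :=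
  eps_achievable lam D F eps n /\
  forall m, eps_achievable lam D F eps m -> (n <= m)%N.

End Defs.

(* Main.v *)
Require Import Defs.
From HB Require Import structures.
From mathcomp Require Import all_boot all_order all_algebra.
From mathcomp Require Import all_classical all_reals all_analysis.
From mathcomp Require Import measurable_realfun.
From mathcomp Require Import lra.
Import Order.TTheory GRing.Theory Num.Theory.
Import numFieldNormedType.Exports.
Local Open Scope classical_set_scope.
Local Open Scope ring_scope.

Section S.
Variable R : realType.
Variable d : nat.

Definition cube (q : d.-tuple rat) (k : nat) : set (d.-tuple R) :=
  \bigcap_(i in [set: 'I_d]) ((fun y : d.-tuple R => tnth y i) @^-1`
      ball (ratr (tnth q i) : R) (k.+1%:R^-1)).

Lemma cube_meas q k : measurable (cube q k).
Proof.
apply: fin_bigcap_measurable; first exact: finite_finset.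
move=> i _; rewrite -[X in measurable X]setTI.
apply: (measurable_tnth (T:=R) i) => //.
exact: measurable_ball.
Qed.

Lemma open_meas (D : set (d.-tuple R)) : open_Rd D -> measurable D.
Proof.
move=> oD.
pose F := fun p : d.-tuple rat * nat =>
  if pselect (cube p.1 p.2 `<=` D) then cube p.1 p.2 else set0.
have -> : D = \bigcup_p F p.
  apply/seteqP; split; last first.
    by move=> y [p _]; rewrite /F; case: pselect => [h /h|].
  move=> x Dx; have [r r0 hr] := oD x Dx.
  pose c := r / (2 * (d%:R + 1)).
  have c0 : 0 < c by apply: divr_gt0 => //; apply: mulr_gt0 => //; lra.
  pose k := Num.Def.trunc (c^-1).
  have ke : k.+1%:R^-1 < c.
    rewrite -[c]invrK ltf_pV2 ?posrE ?invr_gt0 //; first exact: truncnS_gt.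
  pose e : R := k.+1%:R^-1.
  have e0 : 0 < e by rewrite invr_gt0.
  have : forall i : 'I_d, exists q : rat, ratr q \in `](tnth x i - e), (tnth x i + e)[.
    by move=> i; apply: rat_in_itvoo; lra.
  case/boolp.choice => g hg.
  pose q := [tuple g i | i < d].
  have xc : cube q k x.
    move=> i _ /=; rewrite tnth_mktuple /ball /=.
    move: (hg i); rewrite in_itv /= => /andP[h1 h2].
    rewrite -/e; rewrite ltr_norml; apply/andP; split; lra.
  have cD : cube q k `<=` D.
    move=> y yc; apply: hr; rewrite /dist2.
    have Hi : forall i, (tnth y i - tnth x i) ^+ 2 <= (2 * e) ^+ 2.
      move=> i; have := yc i I; have := xc i I; rewrite /ball /= -/e.
      rewrite !ltr_norml => /andP[a1 a2] /andP[b1 b2].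
      have h1 : - (2 * e) <= tnth y i - tnth x i by lra.
      have h2 : tnth y i - tnth x i <= 2 * e by lra.
      nra.
    have Hs : \sum_(i < d) (tnth y i - tnth x i) ^+ 2 <= d%:R * (2 * e) ^+ 2.
      apply: (@le_trans _ _ (\sum_(i < d) (2 * e) ^+ 2)).
        by apply: ler_sum => i _; exact: Hi.
      by rewrite sumr_const card_ord [leRHS]mulrC mulr_natr.
    rewrite -(ger0_norm (ltW r0)) -sqrtr_sqr ltr_sqrt; last by rewrite exprn_gt0.
    apply: le_lt_trans Hs _.
    have hc : e * (2 * (d%:R + 1)) < r.
      by move: ke; rewrite -/e /c ltr_pdivlMr //; lra.
    have d0 : 0 <= d%:R :> R by [].
    set a := e * (2 * (d%:R + 1)) in hc.
    have ha : 0 <= a by rewrite /a; apply: mulr_ge0; [exact: ltW|lra].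
    have h3 : a ^+ 2 < r ^+ 2 by nra.
    have h4 : d%:R * (2 * e) ^+ 2 <= a ^+ 2.
      rewrite /a; have := mulr_ge0 (mulr_ge0 (ltW e0) (ltW e0)) d0.
      have := mulr_ge0 (mulr_ge0 (ltW e0) (ltW e0)) (mulr_ge0 d0 d0).
      have := mulr_ge0 (ltW e0) (ltW e0).
      nra.
    exact: le_lt_trans h4 h3.
  by exists (q, k) => //; rewrite /F; case: pselect.
apply: countable_bigcupT_measurable; first exact: countableP.
move=> p; rewrite /F; case: pselect => ? /=; [exact: (cube_meas p.1 p.2)|exact: measurable0].
Qed.

Lemma dist2_meas (z : d.-tuple R) : measurable_fun setT (fun x : d.-tuple R => dist2 x z).
Proof.
rewrite /dist2.
apply: (@measurableT_comp _ _ _ _ _ _ (@Num.sqrt R)).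
  by apply: continuous_measurable_fun; exact: sqrt_continuous.
apply: measurable_sum => i.
apply: measurable_funX.
apply: measurable_funB => //.
exact: measurable_tnth.
Qed.

Lemma far_meas (D : set (d.-tuple R)) (z : d.-tuple R) (c : R) :
  measurable D -> measurable (D `&` [set x | c <= dist2 x z]).
Proof.
move=> mD; apply: measurableI => //.
have := dist2_meas z measurableT _ (measurable_itv `[c, +oo[).
rewrite setTI; congr measurable; apply/seteqP; split => x /=;
  by rewrite in_itv /= andbT.
Qed.

Lemma lip_meas (D : set (d.-tuple R)) (L : R) (f : d.-tuple R -> R) :
  open_Rd D -> 0 < L ->
  (forall x y, D x -> D y -> `|f x - f y| <= L * dist2 x y) ->
  measurable_fun D f.
Proof.
move=> oD L0 hf.
apply: (measurability _ (RGenOInfty.measurableE R)).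
move=> _ [_ [a ->] <-]; apply: open_meas.
move=> y [Dy]; rewrite /= in_itv /= andbT => ay.
have [r r0 hr] := oD y Dy.
exists (Num.min r ((f y - a) / L)).
  by rewrite lt_min r0 /= divr_gt0 // subr_gt0.
move=> z; rewrite lt_min => /andP[zr za].
have Dz := hr z zr; split => //; rewrite /= in_itv /= andbT.
have := hf z y Dz Dy; rewrite ltr_pdivlMr // in za.
rewrite ler_norml => /andP[h1 h2]; nra.
Qed.


Lemma err_bound (lam : {measure set (d.-tuple R) -> \bar R}) (D : set (d.-tuple R))
  (oD : open_Rd D) (hlD : lam D = 1%E) (L : R) (L0 : 0 < L)
  (f : d.-tuple R -> R) (hf : lip_class D L f) (x0 : d.-tuple R) (Dx0 : D x0) (c : R) :
  (`| (\int[lam]_(x in D) (f x)%:E) - (f x0)%:E | <=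
     (L * `|c|)%:E + 2%:E * lam (D `&` [set x | (c <= dist2 x x0)%R]))%E.
Proof.
case: hf => hb hl.
have mD := @open_meas D oD.
have mf := @lip_meas D L f oD L0 hl.
set far := D `&` _.
have mfar : measurable far by apply: far_meas.
have bnd : forall g : d.-tuple R -> R, (forall x, D x -> `|g x| <= 2) ->
    [bounded g x | x in D].
  move=> g hg; rewrite /bounded_near; near=> M; move=> y Dy /=.
  apply: (le_trans (hg y Dy)); near: M; exact: nbhs_pinfty_ge.
have lfin : (lam D < +oo)%E by rewrite hlD ltry.
have intf : lam.-integrable D (EFin \o f).
  apply: measurable_bounded_integrable => //; apply: bnd => x Dx.
  by apply: (le_trans (hb x Dx)); lra.
have intc : lam.-integrable D (EFin \o cst (f x0)).
  apply: measurable_bounded_integrable => //; apply: bnd => x Dx.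
  by rewrite /cst; apply: (le_trans (hb x0 Dx0)); lra.
have -> : ((f x0)%:E = \int[lam]_(x in D) (cst (f x0) x)%:E)%E.
  by rewrite /cst integral_cst // hlD mule1.
rewrite -integralB_EFin //.
have mg : measurable_fun D (fun x => ((f x)%:E - (cst (f x0) x)%:E)%E).
  apply/measurable_EFinP => /=.
  by apply: measurable_funB => //.
apply: (le_trans (le_abse_integral _ mD mg)).
apply: (@le_trans _ _ (\int[lam]_(x in D) ((L * `|c|)%:E + 2%:E * (\1_far x)%:E))%E).
  apply: ge0_le_integral => //.
  - by apply: measurableT_comp => //.
  - apply: emeasurable_funD => //.
    apply: emeasurable_funM => //.
    by apply/measurable_EFinP; exact: measurable_indic.
  - move=> x Dx /=; rewrite -EFinM -EFinD lee_fin.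
    rewrite /cst /indic.
    have [Fx|nFx] := boolP (x \in far).
      rewrite mulr1; apply: (le_trans (ler_normB _ _)).
      have := hb x Dx; have := hb x0 Dx0; have : 0 <= L * `|c| by rewrite mulr_ge0 // ltW.
      lra.
    rewrite mulr0 addr0.
    have ndist : dist2 x x0 < c.
      rewrite ltNge; apply/negP => h; move/negP: nFx; apply.
      by rewrite inE.
    apply: (le_trans (hl x x0 Dx Dx0)).
    rewrite ler_pM2l //; apply: (le_trans (ltW ndist)); exact: ler_norm.
rewrite ge0_integralD //.
all: try (by move=> x _; rewrite lee_fin mulr_ge0 // ltW).
all: try (by move=> x _; apply: mule_ge0 => //; rewrite lee_fin).
all: try (by apply: emeasurable_funM => //; apply/measurable_EFinP; exact: measurable_indic).
rewrite integral_cst // hlD mule1.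
rewrite ge0_integralZl //.
all: try (by move=> x _; rewrite lee_fin).
all: try (by apply/measurable_EFinP; exact: measurable_indic).
rewrite integral_indic // setIidl //; by move=> x [].
Unshelve. all: by end_near.
Qed.

End S.

Lemma cst_in_class (R : realType) (d : nat) (D : set (d.-tuple R)) (L : R) (a : R) :
  0 < L -> `|a| <= 1 -> lip_class D L (fun _ => a).
Proof.
move=> L0 ha; split => // x y _ _; rewrite subrr normr0.
by rewrite mulr_ge0 ?sqrtr_ge0 // ltW.
Qed.

Theorem proposition3p3 (R : realType)
    (lam : forall d : nat, {measure set (d.-tuple R) -> \bar R})
    (hlam : forall d : nat, is_lebesgue_measure (lam d))
    (D : forall d : nat, set (d.-tuple R))
    (hD : propertyP lam D)
    (L : nat -> R) (hLpos : forall d, 0 < L d)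
    (hL : (fun d : nat => L d * Num.sqrt d%:R) @ \oo --> 0) :
  forall eps : R, 0 < eps < 1 ->
    exists d0 : nat, forall d : nat, (d0 <= d)%N ->
      info_complexity_eq (lam d) (D d) (lip_class (D d) (L d)) eps 1.
Proof.
move=> eps /andP[e0 e1].
case: hD => [oD [hl1 [xs [R0 [Dxs hfar]]]]].
pose K := `|R0| + 1.
have K0 : 0 < K by rewrite /K; have := normr_ge0 R0; lra.
have eK : 0 < eps / (2 * K) by apply: divr_gt0 => //; lra.
have h1 : \forall t \near \oo, `|L t * Num.sqrt t%:R| < eps / (2 * K).
  exact: (cvgr0_norm_lt _ hL).
have e4 : (0 < eps / 4)%R by lra.
have h2 : \forall t \near \oo, (lam t [set x | D t x /\ (R0 * Num.sqrt t%:R <= dist2 x (xs t))%R] < (eps / 4)%:E)%E.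
  have hn : nbhs (0%E : \bar R) [set y | (y < (eps/4)%:E)%E].
    apply: open_nbhs_nbhs; split; first exact: open_ereal_lt_ereal.
    by rewrite /= lte_fin.
  exact: (hfar _ hn).
case: h1 => N1 _ H1; case: h2 => N2 _ H2.
exists (maxn N1 N2) => n; rewrite geq_max => /andP[n1 n2].
have {H1}H1 := H1 n n1; have {H2}H2 := H2 n n2; rewrite /= in H1 H2.
have mD := @open_meas R n (D n) (oD n).
split.
- exists (Algorithm (fun _ _ => xs n) (fun ys => head 0 ys)); split.
    by move=> k ys _; exact: Dxs.
  move=> f hf; rewrite /alg_output /=.
  apply: (le_trans (@err_bound R n (lam n) (D n) (oD n) (hl1 n) (L n) (hLpos n) f hf (xs n) (Dxs n) (R0 * Num.sqrt n%:R))).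
  have hlf : (0 <= lam n (D n `&` [set x | (R0 * Num.sqrt n%:R <= dist2 x (xs n))%R]))%E.
    exact: measure_ge0.
  have {}H2 : (lam n (D n `&` [set x | (R0 * Num.sqrt n%:R <= dist2 x (xs n))%R]) < (eps / 4)%:E)%E := H2.
  set m := lam n _ in H2 hlf *.
  have hm : (2%:E * m <= (eps / 2)%:E)%E.
    apply: (@le_trans _ _ (2%:E * (eps / 4)%:E)%E).
      by apply: lee_wpmul2l; [rewrite lee_fin|exact: ltW].
    by rewrite -EFinM lee_fin; lra.
  have hr : L n * `|R0 * Num.sqrt n%:R| <= eps / 2.
    have hs := sqrtr_ge0 (n%:R : R).
    have hLn := hLpos n.
    rewrite normrM (ger0_norm hs) mulrCA.
    have hp : 0 <= L n * Num.sqrt n%:R by rewrite mulr_ge0 // ltW.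
    rewrite (ger0_norm hp) in H1.
    have hR := normr_ge0 R0.
    move: H1; rewrite ltr_pdivlMr; last lra.
    rewrite /K => H1; nra.
  have hr' : ((L n * `|R0 * Num.sqrt n%:R|)%:E <= (eps / 2)%:E)%E by rewrite lee_fin.
  apply: (le_trans (leeD hr' hm)).
  by rewrite -EFinD lee_fin; lra.
- move=> [|m] //.
  case=> A [_ HA].
  have i1 := HA _ (@cst_in_class R n (D n) (L n) 1 (hLpos n) _).
  have i2 := HA _ (@cst_in_class R n (D n) (L n) (-1) (hLpos n) _).
  rewrite normr1 lexx in i1; rewrite normrN normr1 lexx in i2.
  have {i1}i1 := i1 erefl; have {i2}i2 := i2 erefl.
  rewrite /alg_output /= in i1 i2.
  rewrite (integral_cst (lam n) mD 1) (integral_cst (lam n) mD (-1)) hl1 in i1 i2.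
  rewrite mule1 -EFinB abse_EFin lee_fin in i1.
  rewrite mule1 -EFinB abse_EFin lee_fin in i2.
  move: i1 i2; rewrite !ler_norml; lra.
Qed.
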